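(* Let $R$ be an NC-nilpotent algebra, $\pi:R\to R_{ab}$ the abelianization map, and $\overline S\subset R_{ab}-\{0\}$ any multiplicative subset. Then $S=\pi^{-1}(\overline S)$ satisfies the Ore conditions: (OL1) for any $a\in R$, $s\in S$ there are $b\in R$, $u\in S$ with $ua=bs$; (OL2) if $as=0$ with $a\in R,s\in S$ then $ta=0$ for some $t\in S$; (OR1) for any $b\in R$, $u\in S$ there are $a\in R$, $s\in S$ with $ua=bs$; (OR2) if $sa=0$ with $a\in R,s\in S$ then $at=0$ for some $t\in S$.
   Context: Algebras are associative unital $\mathbf{C}$-algebras. $R_{ab}=R/[R,R]$. NC-filtration: with $R^{\rm Lie}_1=R$, $R^{\rm Lie}_m=[R,R^{\rm Lie}_{m-1}]$ ($[a,b]=ab-ba$), $F^dR=\sum_m\sum_{i_1+\dots+i_m-m=d}R\,R^{\rm Lie}_{i_1}R\cdots R\,R^{\rm Lie}_{i_m}R$. $R$ is NC-nilpotent if $F^iR=0$ for $i\gg0$. *)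

(* Defs.v *)
From HB Require Import structures.
From mathcomp Require Import all_boot all_order all_algebra.
From mathcomp Require Import complex.
From mathcomp Require Import Rstruct.
Set Implicit Arguments. Unset Strict Implicit. Unset Printing Implicit Defensive.
Import Order.TTheory GRing.Theory Num.Theory.
Local Open Scope ring_scope.

Definition CC : fieldType := (Rdefinitions.R)[i].

Section NC.
Variable A : algType CC.

Definition lspan (P : A -> Prop) : A -> Prop :=
  fun x => exists s : seq (CC * A),
    (forall p, p \in s -> P p.2) /\ x = \sum_(p <- s) p.1 *: p.2.

Definition commr (a b : A) : A := a * b - b * a.

(* Lie powers: R^Lie_1 = R, R^Lie_{m} = [R, R^Lie_{m-1}] (a subspace,
   i.e. the span of the commutators [a,b], a in R, b in R^Lie_{m-1}).
   Index 0 is never used (indices start at 1); we set it to R. *)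
Fixpoint lie_pow (m : nat) : A -> Prop :=
  match m with
  | 0 => fun _ => True
  | 1 => fun _ => True
  | m'.+1 => lspan (fun x => exists a b, lie_pow m' b /\ x = commr a b)
  end.

(* F^d R = sum over m and (i_1,...,i_m) (all i_j >= 1) with
   i_1+...+i_m - m = d of  R R^Lie_{i_1} R ... R R^Lie_{i_m} R.
   As a subspace it is spanned by the products
     r_0 * l_1 * r_1 * ... * l_m * r_m,  l_j in R^Lie_{i_j}, r_j in R,
   encoded by r_0 and the sequence of triples (i_j, l_j, r_j). *)
Definition NC_gen (d : nat) (x : A) : Prop :=
  exists (r0 : A) (s : seq (nat * A * A)),
    (forall t, t \in s -> (0 < t.1.1)%N /\ lie_pow t.1.1 t.1.2) /\
    (\sum_(t <- s) t.1.1 - size s)%N = d /\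
    x = r0 * \prod_(t <- s) (t.1.2 * t.2).

Definition NC_filt (d : nat) : A -> Prop := lspan (NC_gen d).

Definition NC_nilpotent : Prop :=
  exists N : nat, forall i : nat, (N <= i)%N -> forall x : A, NC_filt i x -> x = 0.

Definition comm_ideal (x : A) : Prop :=
  exists s : seq (A * A * A * A),
    x = \sum_(t <- s) t.1.1.1 * commr t.1.1.2 t.1.2 * t.2.
End NC.

Definition is_abelianization (A : algType CC) (B : comPzRingType)
  (pi : {rmorphism A -> B}) : Prop :=
  (forall y : B, exists x : A, pi x = y) /\
  (forall x : A, pi x = 0 <-> comm_ideal x).

Definition multiplicative (B : comPzRingType) (Sb : B -> Prop) : Prop :=
  Sb 1 /\ (forall x y, Sb x -> Sb y -> Sb (x * y)).

(* Main.v *)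
Require Import Defs.
From mathcomp Require Import all_boot all_order all_algebra.
From mathcomp Require Import zify.
Set Implicit Arguments. Unset Strict Implicit. Unset Printing Implicit Defensive.
Local Open Scope ring_scope.
Module Aux.
Import GRing.Theory.

Section Aux.
Variable A : algType CC.
Implicit Types (P Q : A -> Prop) (x y : A).

Lemma lspan0 P : lspan P 0.
Proof. by exists [::]; rewrite big_nil. Qed.

Lemma lspanD P x y : lspan P x -> lspan P y -> lspan P (x + y).
Proof.
move=> [s1 [h1 ->]] [s2 [h2 ->]]; exists (s1 ++ s2); split; last by rewrite big_cat.
by move=> p; rewrite mem_cat => /orP [/h1|/h2].
Qed.

Lemma lspan_gen P x : P x -> lspan P x.
Proof.
move=> hx; exists [:: (1, x)]; split; last by rewrite big_seq1 scale1r.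
by move=> p; rewrite inE => /eqP ->.
Qed.

Lemma lspan_lin P Q (f : A -> A) :
  (forall x y, f (x + y) = f x + f y) -> (forall c x, f (c *: x) = c *: f x) ->
  (forall g, P g -> lspan Q (f g)) ->
  (forall c g, lspan Q g -> lspan Q (c *: g)) ->
  forall x, lspan P x -> lspan Q (f x).
Proof.
move=> fD fZ hg hZ x [s [hs ->]]; elim: s hs => [|p s IH] hs.
  have -> : f (\sum_(p <- [::]) p.1 *: p.2) = f 0 by rewrite big_nil.
  by rewrite -(scale0r (0 : A)) fZ scale0r; apply: lspan0.
rewrite big_cons fD fZ; apply: lspanD.
  by apply: hZ; apply: hg; apply: hs; rewrite inE eqxx.
by apply: IH => q hq; apply: hs; rewrite inE hq orbT.
Qed.

Lemma lspanZ P c x : lspan P x -> lspan P (c *: x).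
Proof.
move=> [s [hs ->]]; exists [seq (c * p.1, p.2) | p <- s]; split.
  by move=> p /mapP [q hq ->] /=; apply: hs.
by rewrite big_map scaler_sumr; apply: eq_bigr => p _ /=; rewrite scalerA.
Qed.

Lemma lspanN P x : lspan P x -> lspan P (- x).
Proof. by move=> h; rewrite -scaleN1r; apply: lspanZ. Qed.

Lemma commrD y a b : commr y (a + b) = commr y a + commr y b.
Proof. by rewrite /commr mulrDr mulrDl opprD addrACA. Qed.

Lemma commrZ y c a : commr y (c *: a) = c *: commr y a.
Proof. by rewrite /commr scalerBr -scalerAl -scalerAr. Qed.

Lemma commrM y a b : commr y (a * b) = commr y a * b + a * commr y b.
Proof. rewrite /commr mulrBl mulrBr !mulrA addrA subrK; reflexivity. Qed.


Definition validS (s : seq (nat * A * A)) :=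
  forall t, t \in s -> (0 < t.1.1)%N /\ lie_pow t.1.1 t.1.2.

Definition sumS (s : seq (nat * A * A)) := (\sum_(t <- s) t.1.1)%N.
Definition prodS (s : seq (nat * A * A)) := \prod_(t <- s) (t.1.2 * t.2).

Lemma size_sumS s : validS s -> (size s <= sumS s)%N.
Proof.
rewrite /sumS; elim: s => [|t s IH] hv; first by rewrite big_nil.
rewrite big_cons /=.
have [h1 _] := hv t (mem_head _ _).
have : validS s by move=> u hu; apply: hv; rewrite inE hu orbT.
by move/IH => h; rewrite -add1n; apply: leq_add.
Qed.

Lemma validS_cat s1 s2 : validS s1 -> validS s2 -> validS (s1 ++ s2).
Proof. by move=> h1 h2 t; rewrite mem_cat => /orP [/h1|/h2]. Qed.

Lemma validS_cons t s : (0 < t.1.1)%N -> lie_pow t.1.1 t.1.2 -> validS s -> validS (t :: s).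
Proof. by move=> h1 h2 hs u; rewrite inE => /orP [/eqP ->|/hs]. Qed.

Lemma validS_nil : validS [::].
Proof. by []. Qed.

Lemma gen_of r0 s d : validS s -> (sumS s - size s)%N = d ->
  NC_filt d (r0 * prodS s).
Proof. by move=> hv hd; apply: lspan_gen; exists r0, s. Qed.

Lemma lie_succ i l y : (0 < i)%N -> lie_pow i l -> lie_pow i.+1 (commr y l).
Proof.
case: i => [//|i] _ hl /=; apply: lspan_gen; by exists y, l.
Qed.

Lemma lie_two y r : lie_pow 2 (commr y r).
Proof. by apply: lspan_gen; exists y, r. Qed.

Lemma commrM3 y X a b c : X * commr y (a * b * c) =
  X * commr y a * b * c + X * a * commr y b * c + X * a * b * commr y c.
Proof.
rewrite /commr !mulrBr !mulrBl !mulrA.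
by rewrite !addrA subrK subrK.
Qed.

Lemma mainM s : forall y r0 s1, validS s1 -> validS s ->
  NC_filt (sumS (s1 ++ s) - size (s1 ++ s)).+1 (r0 * prodS s1 * commr y (prodS s)).
Proof.
elim: s => [|[[i l] r] s IH] y r0 s1 h1 hs.
  by rewrite /prodS big_nil /commr mul1r mulr1 subrr mulr0; apply: lspan0.
have [hi hl] := hs _ (mem_head _ _); rewrite /= in hi hl.
have hs' : validS s by move=> u hu; apply: hs; rewrite inE hu orbT.
have e1 := size_sumS h1; have e2 := size_sumS hs'.
rewrite {2}/prodS big_cons /= -/(prodS s) commrM3.
apply: lspanD; first apply: lspanD.
-
  have -> : r0 * prodS s1 * commr y l * r * prodS s =
     r0 * prodS (s1 ++ (i.+1, commr y l, r) :: s).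
    by rewrite /prodS big_cat big_cons /= !mulrA.
  apply: gen_of.
    apply: validS_cat => //; apply: validS_cons => //; exact: lie_succ.
  rewrite /sumS !big_cat !big_cons /= !size_cat /=.
  move: e1 e2; rewrite /sumS; lia.
- have -> : r0 * prodS s1 * l * commr y r * prodS s =
     r0 * prodS (s1 ++ (i, l, 1) :: (2, commr y r, 1) :: s).
    by rewrite /prodS big_cat !big_cons /= !mulr1 !mulrA.
  apply: gen_of.
    apply: validS_cat => //; apply: validS_cons => //; apply: validS_cons => //.
    exact: lie_two.
  rewrite /sumS !big_cat !big_cons /= !size_cat /=.
  move: e1 e2; rewrite /sumS; lia.
- have := IH y r0 (rcons s1 (i, l, r)).
  rewrite cat_rcons.
  have -> : prodS (rcons s1 (i, l, r)) = prodS s1 * l * r.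
    by rewrite /prodS -cats1 big_cat big_seq1 /= mulrA.
  rewrite !mulrA; apply.
    by rewrite -cats1; apply: validS_cat => //; apply: validS_cons.
  exact: hs'.
Qed.

Lemma filt_comm k x y : NC_filt k x -> NC_filt k.+1 (commr y x).
Proof.
apply: lspan_lin; [exact: commrD|exact: commrZ| |by move=> c g; apply: lspanZ].
move=> g [r0 [s [hv [hd ->]]]].
rewrite commrM; apply: lspanD.
  have -> : commr y r0 * \prod_(t <- s) (t.1.2 * t.2) = 1 * prodS ((2, commr y r0, 1) :: s).
    by rewrite /prodS big_cons /= mulr1 mul1r.
  apply: gen_of; first by apply: validS_cons => //; apply: lie_two.
  have := size_sumS hv; move: hd; rewrite /sumS big_cons /=; lia.
have := mainM y r0 validS_nil hv.
by rewrite /prodS big_nil mulr1 /= -hd.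
Qed.

Lemma filt0 x : NC_filt 0 x.
Proof.
have e : (sumS [::] - size ([::] : seq (nat * A * A)))%N = 0%N by rewrite /sumS big_nil.
have := @gen_of x [::] 0 validS_nil e.
by rewrite /prodS big_nil mulr1.
Qed.

End Aux.

Lemma core (A : algType CC) (B : comPzRingType)
  (pi : {rmorphism A -> B}) (Sb : B -> Prop) :
  NC_nilpotent A ->
  is_abelianization pi ->
  Defs.multiplicative Sb ->
  (forall y, Sb y -> y <> 0) ->
  let S := fun s : A => Sb (pi s) in
  (forall a s : A, S s -> exists b u : A, S u /\ u * a = b * s) /\
  (forall a s : A, S s -> a * s = 0 -> exists t : A, S t /\ t * a = 0) /\
  (forall b u : A, S u -> exists a s : A, S s /\ u * a = b * s) /\
  (forall a s : A, S s -> s * a = 0 -> exists t : A, S t /\ a * t = 0).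
Proof.
move=> [N hN] _ [hS1 hSM] _ S.
have S1 : S 1 by rewrite /S rmorph1.
have SM : forall u v, S u -> S v -> S (u * v).
  by move=> u v hu hv; rewrite /S rmorphM; apply: hSM.
have down : forall P : A -> Prop, P 0 ->
    (forall k x, (forall z, NC_filt k.+1 z -> P z) -> NC_filt k x -> P x) ->
    forall x, P x.
  move=> P P0 step.
  suff H : forall n k, (N <= n + k)%N -> forall x, NC_filt k x -> P x.
    by move=> x; apply: (H N 0%N); [rewrite addn0|apply: filt0].
  elim=> [|n IH] k hk x hx.
    by rewrite (hN k _ x hx).
  apply: (step k) => // z hz; apply: (IH k.+1) => //; by rewrite addnS -addSn.
split; [|split; [|split]].
- move=> a s hs; pattern a; apply: down; first by exists 0, 1; rewrite mulr0 mul0r.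
  move=> k x IH hx.
  have [b' [u' [hu' e]]] := IH _ (filt_comm s hx).
  exists (u' * x + b'), (u' * s); split; first exact: SM.
  rewrite /commr in e.
  by rewrite mulrDl -e mulrBr !mulrA addrC subrK.
- move=> a s hs; pattern a; apply: down; first by move=> _; exists 1; rewrite mulr0.
  move=> k x IH hx hxs.
  have [|t [ht e]] := IH _ (filt_comm s hx).
    by rewrite /commr mulrBl -!mulrA hxs mulr0 mulrA hxs mul0r subrr.
  exists (t * s); split; first exact: SM.
  by rewrite /commr hxs subr0 mulrA in e.
- move=> b u hu; pattern b; apply: down; first by exists 0, 1; rewrite mulr0 mul0r.
  move=> k x IH hx.
  have [a' [s' [hs' e]]] := IH _ (lspanN (filt_comm u hx)).
  exists (x * s' + a'), (u * s'); split; first exact: SM.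
  rewrite /commr opprB in e.
  by rewrite mulrDr e mulrBl !mulrA addrC subrK.
- move=> a s hs; pattern a; apply: down; first by move=> _; exists 1; rewrite mul0r.
  move=> k x IH hx hsx.
  have [|t [ht e]] := IH _ (lspanN (filt_comm s hx)).
    by rewrite /commr opprB mulrBr !mulrA hsx mul0r -mulrA hsx mulr0 subrr.
  exists (s * t); split; first exact: SM.
  by rewrite /commr opprB hsx subr0 -mulrA in e.
Qed.

End Aux.

Theorem proposition2p1p5 (A : algType CC) (B : comPzRingType)
  (pi : {rmorphism A -> B}) (Sb : B -> Prop) :
  NC_nilpotent A ->
  is_abelianization pi ->
  multiplicative Sb ->
  (forall y, Sb y -> y <> 0) ->
  let S := fun s : A => Sb (pi s) in
  (* (OL1) *) (forall a s : A, S s -> exists b u : A, S u /\ u * a = b * s) /\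
  (* (OL2) *) (forall a s : A, S s -> a * s = 0 -> exists t : A, S t /\ t * a = 0) /\
  (* (OR1) *) (forall b u : A, S u -> exists a s : A, S s /\ u * a = b * s) /\
  (* (OR2) *) (forall a s : A, S s -> s * a = 0 -> exists t : A, S t /\ a * t = 0).
Proof. exact: Aux.core. Qed.
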